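(* Let $p$ be an odd prime and $G$ a group of order $p^4$. (a) $\operatorname{rdim}(G) \le p+1$. (b) If $Z(G) \cong (\mathbb{Z}/p\mathbb{Z})^2$ and $G/Z(G) \cong (\mathbb{Z}/p\mathbb{Z})^2$, then $\operatorname{rdim}(G) = p+1$.
   Context: $\operatorname{rdim}(G)$ is the minimal dimension of a faithful complex linear representation of $G$. *)

(* Defs.v *)
From HB Require Import structures.
From mathcomp Require Import all_boot all_order all_algebra all_fingroup all_solvable all_field all_character.
From Stdlib Require Import ClassicalEpsilon.
Set Implicit Arguments. Unset Strict Implicit. Unset Printing Implicit Defensive.

Definition has_faithful_rep (gT : finGroupType) (G : {group gT}) (n : nat) : Prop :=
  exists rG : mx_representation algC G n, mx_faithful rG.

Definition has_faithful_repb (gT : finGroupType) (G : {group gT}) (n : nat) : bool :=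
  if excluded_middle_informative (has_faithful_rep G n) then true else false.

Lemma has_faithful_rep_regular (gT : finGroupType) (G : {group gT}) :
  exists n, has_faithful_repb G n.
Proof.
exists #|G|; rewrite /has_faithful_repb.
case: excluded_middle_informative => // [[]].
by exists (regular_repr algC G); exact: regular_mx_faithful.
Qed.

Definition rdim (gT : finGroupType) (G : {group gT}) : nat :=
  ex_minn (has_faithful_rep_regular G).

(* Main.v *)
Require Import Defs.
From mathcomp Require Import all_boot all_order all_algebra all_fingroup all_solvable all_field all_character.
From mathcomp Require Import zify.
From Stdlib Require Import ClassicalEpsilon.
Set Implicit Arguments. Unset Strict Implicit. Unset Printing Implicit Defensive.
Section S1.
Import GroupScope Order.TTheory GRing.Theory Num.Theory.

Lemma rdim_le (gT : finGroupType) (G : {group gT}) n :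
  has_faithful_rep G n -> (rdim G <= n)%N.
Proof.
move=> h; rewrite /rdim; case: ex_minnP => m _; apply.
by rewrite /has_faithful_repb; case: excluded_middle_informative.
Qed.

Lemma rdim_spec (gT : finGroupType) (G : {group gT}) :
  has_faithful_rep G (rdim G).
Proof.
rewrite /rdim; case: ex_minnP => m; rewrite /has_faithful_repb.
by case: excluded_middle_informative.
Qed.

Lemma char_faithful (gT : finGroupType) (G : {group gT}) (chi : 'CF(G)) :
  chi \is a character -> cfker chi \subset [1] ->
  has_faithful_rep G (Num.truncn (chi 1%g)).
Proof.
move=> /char_reprP[[n rG] ->] ker1.
rewrite cfRepr1 natrK; exists rG; rewrite /mx_faithful -cfker_repr //.
Qed.

Lemma faithful_char (gT : finGroupType) (G : {group gT}) n :
  has_faithful_rep G n -> exists chi : 'CF(G),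
  [/\ chi \is a character, cfker chi \subset [1] & chi 1%g = (n%:R)%R].
Proof.
case=> rG ff; exists (cfRepr rG); split; first exact: cfRepr_char.
  by rewrite cfker_repr.
exact: cfRepr1.
Qed.

End S1.

Section S3.
Import GroupScope Order.TTheory GRing.Theory Num.Theory.
Local Open Scope ring_scope.

Lemma cfker_addr (gT : finGroupType) (G : {group gT}) (phi psi : 'CF(G)) :
  phi \is a character -> psi \is a character ->
  cfker (phi + psi)%R \subset cfker psi.
Proof.
move=> Nphi Npsi; rewrite (cfkerE Npsi) subsetI cfker_sub /=.
apply/bigcapsP=> j Cj; apply: cfker_constt; first by rewrite rpredD.
have [chi' Nchi' ->] := constt_charP j Npsi Cj.
apply/constt_charP; first by rewrite rpredD // rpredD // irr_char.
by exists (phi + chi')%R; rewrite ?rpredD // addrCA.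
Qed.

Lemma irr1_pow (gT : finGroupType) (G : {group gT}) p k (i : Iirr G) :
  prime p -> #|G| = (p ^ k)%N -> exists2 m, (m <= k)%N & ('chi_i 1%g = ((p ^ m)%N)%:R)%R.
Proof.
move=> pp oG; have := dvd_irr1_cardG i; rewrite irr1_degree dvdC_nat oG.
by case/(dvdn_pfactor _ _ pp) => m le ->; exists m.
Qed.

Lemma lower_bound (gT : finGroupType) (G : {group gT}) p k n :
  prime p -> #|G| = (p ^ k)%N -> ~~ abelian G -> ~~ cyclic 'Z(G) ->
  has_faithful_rep G n -> (p.+1 <= n)%N.
Proof.
move=> pp oG nabG ncZ /faithful_char [chi [Nchi ker1 chi1]].
have [i /andP[Ci nlin]] :
    exists i, (i \in irr_constt chi) && ~~ ('chi_i \is a linear_char).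
  apply/existsP; apply: contraR nabG => /existsPn H.
  apply/derG1P/trivgP; apply: subset_trans ker1.
  rewrite cfkerE // subsetI der1_subG; apply/bigcapsP=> j Cj.
  by apply: lin_char_der1; have := H j; rewrite Cj /= negbK.
have [chi' Nchi' defchi] := constt_charP i Nchi Ci.
have nz' : chi' != 0%R.
  apply: contra ncZ => /eqP chi'0; apply: (@irr_faithful_center _ _ i).
  by rewrite cfaithfulE; move: ker1; rewrite defchi chi'0 addr0.
have ge1 : (1 <= chi' 1%g)%R.
  have /natrP[m dm] := Cnat_char1 Nchi'.
  have : chi' 1%g != 0%R by rewrite char1_eq0.
  by rewrite dm pnatr_eq0 ler1n lt0n.
have gep : (p%:R <= 'chi_i 1%g)%R.
  have [m _ dm] := irr1_pow i pp oG; rewrite dm ler_nat.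
  move: dm; case: m => [|m] dm.
    by case/negP: nlin; rewrite qualifE/= irr_char dm expn0 eqxx.
  by rewrite (expnS p m) -{1}(muln1 p) leq_mul2l expn_gt0 prime_gt0 ?orbT.
have : ((p.+1)%:R <= n%:R :> algC)%R.
  by rewrite -chi1 defchi cfunE -addn1 natrD lerD.
by rewrite ler_nat.
Qed.

End S3.

Section S4.
Import GroupScope Order.TTheory GRing.Theory Num.Theory.
Local Open Scope ring_scope.

Lemma greedy (gT : finGroupType) (G : {group gT}) p k D (M : {group gT}) :
  prime p -> #|G| = (p ^ k)%N -> M \subset G ->
  (forall i : Iirr G, 'chi_i 1%g <= D%:R) ->
  exists chi : 'CF(G), [/\ chi \is a character,
     chi 1%g <= (D * logn p #|M|)%N%:R & M :&: cfker chi = 1%g].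
Proof.
move=> pp oG sMG hD.
have pw : forall H : {group gT}, H \subset G -> exists a, #|H| = (p ^ a)%N.
  move=> H sHG; have := cardSg sHG; rewrite oG.
  by case/(dvdn_pfactor _ _ pp) => a _ ->; exists a.
elim: {M}_.+1 {-2}M (ltnSn #|M|) sMG => // m IH M leM sMG.
have [-> | ntM] := eqVneq M 1%G.
  exists 0; split; first exact: cfun0_char.
    by rewrite cfunE ler0n.
  by rewrite /= setI1g.
have [z Mz nz] := trivgPn _ ntM.
have [i nKi] : exists i, z \notin cfker 'chi[G]_i.
  apply/existsP; apply: contraR nz => /existsPn H.
  have : z \in \bigcap_i cfker 'chi[G]_i by apply/bigcapP=> i _; have := H i; rewrite negbK.
  by rewrite TI_cfker_irr inE.
pose M' := (M :&: cfker 'chi_i)%G.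
have sM'M : M' \subset M by exact: subsetIl.
have ltM' : (#|M'| < #|M|)%N.
  apply: proper_card; rewrite properEneq sM'M andbT.
  apply/negP => /eqP eqM; have : z \in M' by rewrite eqM.
  by rewrite inE (negPf nKi) andbF.
have [chi' [Nchi' chi'1 ker']] := IH M' (leq_trans ltM' leM) (subset_trans sM'M sMG).
exists ('chi_i + chi'); split.
- by rewrite rpredD ?irr_char.
- have [a oM] := pw M sMG; have [b oM'] := pw M' (subset_trans sM'M sMG).
  move: ltM' chi'1; rewrite oM oM' !pfactorK // ltn_exp2l ?prime_gt1 // => ltba chi'1.
  rewrite cfunE (le_trans (lerD (hD i) chi'1)) // -natrD ler_nat.
  by rewrite -[(D + _)%N]addnC -mulnSr leq_mul2l ltba orbT.
- apply/trivgP; rewrite -ker'; apply/subsetP=> x /setIP[Mx Kx].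
  apply/setIP; split; last exact: (subsetP (cfker_addr (irr_char i) Nchi') x Kx).
  apply/setIP; split=> //.
  have : x \in cfker (chi' + 'chi_i) by rewrite addrC.
  by move/(subsetP (cfker_addr Nchi' (irr_char i))).
Qed.

End S4.

Section S5.
Import GroupScope.

Lemma pw_card (gT : finGroupType) (G H : {group gT}) p k :
  prime p -> #|G| = (p ^ k)%N -> H \subset G -> exists2 a, (a <= k)%N & #|H| = (p ^ a)%N.
Proof.
move=> pp oG sHG; have := cardSg sHG; rewrite oG.
by case/(dvdn_pfactor _ _ pp) => a le ->; exists a.
Qed.

Lemma der1_cyclic_p4 (gT : finGroupType) (G : {group gT}) p :
  prime p -> #|G| = (p ^ 4)%N -> #|'Z(G)| = (p ^ 2)%N -> cyclic G^`(1).
Proof.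
move=> pp oG oZ; set Z := 'Z(G).
have nZG : G \subset 'N(Z) by exact: normal_norm (center_normal G).
have cZG : Z \subset 'C(G) by exact: subsetIr.
have sZG : Z \subset G by exact: center_sub.
have oGZ : #|G / Z| = (p ^ 2)%N.
  rewrite card_quotient // -(divgS sZG) oG oZ.
  by rewrite (_ : 4 = 2 + 2)%N // expnD mulnK // expn_gt0 prime_gt0.
have sG'Z : G^`(1) \subset Z.
  by apply: der1_min nZG (card_p2group_abelian pp oGZ).
have neZG : Z != G.
  apply/negP => /eqP/(congr1 (fun H : {set gT} => #|H|)); rewrite oZ oG => /eqP.
  by rewrite eqn_exp2l ?prime_gt1.
have ncycGZ : ~~ cyclic (G / Z).
  apply/negP => /cyclic_center_factor_abelian cG; case/negP: neZG.
  by rewrite eqEsubset sZG subsetI subxx.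
have [x Gx nZx] : exists2 x, x \in G & x \notin Z.
  apply/subsetPn; apply: contra neZG => sGZ; rewrite eqEsubset sZG sGZ.
  done.
pose A := (<[x]> <*> Z)%G.
have sAG : A \subset G by rewrite join_subG cycle_subG Gx sZG.
have [y Gy nAy] : exists2 y, y \in G & y \notin A.
  apply/subsetPn; apply: contra ncycGZ => sGA.
  have eA : (A :=: G) by apply/eqP; rewrite eqEsubset sAG sGA.
  rewrite -eA /= quotientYidr; last by apply: subset_trans nZG; rewrite cycle_subG.
  by rewrite quotient_cycle ?cycle_cyclic // (subsetP nZG).
pose X := (<[x]> <*> <[y]>)%G.
pose H := (X <*> Z)%G.
have sXG : X \subset G by rewrite join_subG !cycle_subG Gx Gy.
have sHG : H \subset G by rewrite join_subG sXG sZG.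
have eH : H :=: G.
  apply/eqP; rewrite eqEcard sHG /=.
  have ZA : Z \proper A.
    by apply/properP; split; [exact: joing_subr | exists x => //; rewrite mem_gen // inE cycle_id].
  have AH : A \proper H.
    apply/properP; split.
      rewrite /A /H /= join_subG joing_subr andbT.
      by apply: subset_trans (joing_subl _ _); apply: joing_subl.
    by exists y => //; rewrite /H /= (subsetP (joing_subl _ _)) // (subsetP (joing_subr _ _)) // cycle_id.
  have [a _ oA] := pw_card pp oG sAG; have [h le4 oH] := pw_card pp oG sHG.
  move: (proper_card ZA) (proper_card AH); rewrite oZ oA oH oG !ltn_exp2l ?prime_gt1 // => lt2a ltah.
  by rewrite leq_exp2l ?prime_gt1 //; apply: leq_trans ltah.
have cXc : [~ x, y] \in 'C(X).
  apply: (subsetP (centS sXG)); apply: (subsetP cZG); apply: (subsetP sG'Z).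
  by rewrite mem_commg.
have dX : X^`(1) = <[[~ x, y]]> := der1_joing_cycles cXc.
suff sub : G^`(1) \subset <[[~ x, y]]> by exact: cyclicS sub (cycle_cyclic _).
rewrite -dX -eH /= (cent_joinEr (subset_trans cZG (centS sXG))).
rewrite gen_subG; apply/subsetP => _ /imset2P[g h /mulsgP[u z Xu Zz ->] /mulsgP[v w Xv Zw ->] ->].
have cG : forall t c, c \in 'Z(G) -> t \in G -> commute c t.
  by move=> t c /(subsetP cZG)/centP Cc /Cc.
have Gu : u \in G by exact: (subsetP sXG).
have Gv : v \in G by exact: (subsetP sXG).
have cc : forall a b : gT, commute a b -> [~ a, b] = 1%g by move=> a b ab; apply/eqP; apply/commgP.
have e1 : [~ u * z, v * w] = [~ u, v].
  rewrite commMgJ (cc _ _ (cG _ _ Zz (groupM Gv (subsetP sZG _ Zw)))) mulg1.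
  rewrite commgMJ (cc _ _ (esym (cG _ _ Zw Gu))) mul1g.
  have e2 : [~ u, v] ^ w = [~ u, v].
    by apply/conjg_fixP/eqP/cc/esym/cG; rewrite ?groupR.
  rewrite e2; apply/conjg_fixP/eqP/cc/esym/cG; rewrite ?groupR //.
by rewrite e1 mem_commg.
Qed.

End S5.

Section ST6.
Import GroupScope Order.TTheory GRing.Theory Num.Theory.
Local Open Scope ring_scope.
Local Open Scope group_scope.

Lemma lin_sep (gT : finGroupType) (G : {group gT}) z :
  z \in G -> z \notin G^`(1) ->
  exists i : Iirr G, ('chi_i 1%g = 1 /\ z \notin cfker 'chi_i)%R.
Proof.
move=> Gz nz.
have nsG' : G^`(1) <| G := der_normal 1 G.
have Nz : z \in 'N(G^`(1)) := subsetP (normal_norm nsG') z Gz.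
have nz1 : coset G^`(1) z != 1.
  by apply: contra nz => /eqP; apply: coset_idr.
have [j nKj] : exists j, coset G^`(1) z \notin cfker 'chi[G / G^`(1)]_j.
  apply/existsP; apply: contraR nz1 => /existsPn H.
  have : coset G^`(1) z \in \bigcap_j cfker 'chi[G / G^`(1)]_j.
    by apply/bigcapP=> i _; have := H i; rewrite negbK.
  by rewrite TI_cfker_irr inE.
have abQ : abelian (G / G^`(1)) by apply: sub_der1_abelian.
exists (mod_Iirr j); rewrite mod_IirrE // cfMod1; split.
  by apply: lin_char1; move/char_abelianP: abQ; apply.
apply: contra nKj; rewrite cfkerEirr inE => /andP[_ /forallP/(_ 1)].
by rewrite mulg1 cfModE // cfMod1 inE.
Qed.

End ST6.

Section ST7.
Import GroupScope Order.TTheory GRing.Theory Num.Theory.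
Local Open Scope ring_scope.
Local Open Scope group_scope.

Lemma index_center_le (gT : finGroupType) (G : {group gT}) p :
  prime p -> #|G| = (p ^ 4)%N -> (#|G : 'Z(G)| <= p ^ 3)%N.
Proof.
move=> pp oG.
have pG : p.-group G by rewrite /pgroup oG pnatX pnat_id.
have ntG : G :!=: 1 by rewrite -cardG_gt1 oG (ltn_exp2l 0) ?prime_gt1.
have ntZ : 'Z(G) :!=: 1 by rewrite (center_nil_eq1 (pgroup_nil pG)).
have [a _ oZ] := pw_card pp oG (center_sub G).
have a0 : (0 < a)%N.
  by move: ntZ; rewrite -cardG_gt1 oZ; case: a {oZ} => //; rewrite expn0.
have := Lagrange (center_sub G); rewrite oZ oG => e.
rewrite -(leq_pmul2l (_ : 0 < p ^ a)%N) ?expn_gt0 ?prime_gt0 // e -expnD leq_exp2l ?prime_gt1 //.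
by lia.
Qed.

Lemma deg_le_p (gT : finGroupType) (G : {group gT}) p (i : Iirr G) :
  prime p -> #|G| = (p ^ 4)%N -> ('chi_i 1%g <= p%:R)%R.
Proof.
move=> pp oG.
have sZ : 'Z(G) \subset ('Z('chi_i))%CF.
  by rewrite -cap_cfcenter_irr; apply: bigcap_inf.
have le1 : (#|G : ('Z('chi_i))%CF| <= p ^ 3)%N.
  apply: leq_trans (index_center_le pp oG).
  by apply: dvdn_leq; [exact: indexg_gt0 | exact: indexgS].
have := (irr1_bound i).1; have [m _ dm] := irr1_pow i pp oG.
rewrite dm -natrX ler_nat => le2.
have := leq_trans le2 le1; rewrite -expnM leq_exp2l ?prime_gt1 // => le3.
rewrite ler_nat -{2}(expn1 p) leq_exp2l ?prime_gt1 //.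
by case: m {dm le2} le3 => [|[|m]].
Qed.

End ST7.

Section ST8.
Import GroupScope Order.TTheory GRing.Theory Num.Theory.
Local Open Scope ring_scope.
Local Open Scope group_scope.

Lemma center_card (gT : finGroupType) (G : {group gT}) p :
  prime p -> #|G| = (p ^ 4)%N -> ~~ abelian G -> ~~ cyclic 'Z(G) ->
  #|'Z(G)| = (p ^ 2)%N.
Proof.
move=> pp oG nab ncyc.
have [a le4 oZ] := pw_card pp oG (center_sub G).
have sZG := center_sub G.
case: a le4 oZ => [|[|[|[|[|a]]]]] // _ oZ.
- by case/negP: ncyc; move/eqP: oZ; rewrite expn0 -trivg_card1 => /eqP ->; exact: cyclic1.
- by case/negP: ncyc; apply: prime_cyclic; rewrite oZ expn1.
- case/negP: nab; apply: cyclic_center_factor_abelian; apply: prime_cyclic.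
  rewrite card_quotient ?normal_norm ?center_normal // -(divgS sZG) oG oZ.
  by rewrite (_ : 4 = 3 + 1)%N // expnD mulKn ?expn_gt0 ?prime_gt0 // expn1.
- case/negP: nab; have eZ : 'Z(G) :=: G.
    by apply/eqP; rewrite eqEcard sZG /= oZ oG.
  by rewrite -eZ center_abelian.
Qed.

End ST8.

Section S9.
Import GroupScope Order.TTheory GRing.Theory Num.Theory.
Local Open Scope ring_scope.
Local Open Scope group_scope.

Lemma upper (gT : finGroupType) (G : {group gT}) (chi : 'CF(G)) B :
  chi \is a character -> cfker chi \subset [1] -> (chi 1%g <= B%:R)%R ->
  (rdim G <= B)%N.
Proof.
move=> Nchi ker le; have := rdim_le (char_faithful Nchi ker).
have /natrP[m dm] := Cnat_char1 Nchi; rewrite dm natrK => h.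
by apply: leq_trans h _; move: le; rewrite dm ler_nat.
Qed.

Lemma Zp2_noncyclic p : prime p -> ~~ cyclic [set: 'Z_p * 'Z_p].
Proof.
move=> pp; apply/negP => /cyclicP[x ex].
have p1 : (1 < p)%N by apply: prime_gt1.
have cZ : #|[set: 'Z_p]| = p by rewrite cardsT card_ord Zp_cast.
have ep : forall n, x ^+ n = (x.1 ^+ n, x.2 ^+ n).
  by elim=> [|n IH]; rewrite ?expgS ?IH //; case: x {ex IH}.
have xp : x ^+ p = 1.
  have := expg_cardG (in_setT x.1); have := expg_cardG (in_setT x.2).
  by rewrite cZ ep => -> ->.
have : #[x] = (p * p)%N by rewrite /order -ex cardsT card_prod card_ord Zp_cast.
move/eqP: xp; rewrite -order_dvdn => /dvdn_leq; rewrite prime_gt0 // => /(_ isT).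
move=> h1 h2; move: h1; rewrite h2; nia.
Qed.

Lemma partA (gT : finGroupType) (G : {group gT}) p :
  prime p -> odd p -> #|G| = (p ^ 4)%N -> (rdim G <= p.+1)%N.
Proof.
move=> pp op oG.
have p3 : (3 <= p)%N.
  have := prime_gt1 pp; case: p pp op {oG} => [|[|[|p]]] //.
have pG : p.-group G by rewrite /pgroup oG pnatX pnat_id.
have nilG := pgroup_nil pG.
have TIZ : forall chi : 'CF(G), cfker chi :&: 'Z(G) = 1 -> cfker chi \subset [1].
  by move=> chi h; rewrite (TI_center_nil nilG (cfker_normal chi) h).
case: (boolP (abelian G)) => [abG | nab].
  have hD : forall i : Iirr G, ('chi_i 1%g <= 1%:R)%R.
    by move=> i; rewrite lin_char1 ?lerr //; move/char_abelianP: abG; apply.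
  have [chi [Nchi le ker]] := greedy pp oG (subxx G) hD.
  apply: (upper Nchi).
    by rewrite -(setIidPr (cfker_sub chi)) ker.
  apply: (le_trans le); rewrite oG pfactorK // mul1n ler_nat; lia.
case: (boolP (cyclic 'Z(G))) => [cZ | ncZ].
  have [i ff] := pgroup_cyclic_faithful pG cZ.
  apply: (upper (irr_char i)); first by rewrite -cfaithfulE.
  apply: (le_trans (deg_le_p i pp oG)); rewrite ler_nat; lia.
have oZ := center_card pp oG nab ncZ.
have cyc' := der1_cyclic_p4 pp oG oZ.
have [z Zz nz] : exists2 z, z \in 'Z(G) & z \notin G^`(1).
  by apply/subsetPn; apply: contra ncZ => s; exact: cyclicS s cyc'.
have Gz : z \in G := subsetP (center_sub G) z Zz.
have [i [deg1 nKi]] := lin_sep Gz nz.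
pose M := ('Z(G) :&: cfker 'chi_i)%G.
have sMG : M \subset G by rewrite subIset // center_sub.
have hD : forall j : Iirr G, ('chi_j 1%g <= p%:R)%R by move=> j; exact: deg_le_p.
have [chi' [Nchi' le ker]] := greedy pp oG sMG hD.
have lM : (logn p #|M| <= 1)%N.
  have [b _ oM] := pw_card pp oG sMG.
  have ltM : (#|M| < #|'Z(G)|)%N.
    apply: proper_card; apply/properP; split; first exact: subsetIl.
    by exists z => //; rewrite inE (negPf nKi) andbF.
  move: ltM; rewrite oM oZ pfactorK // ltn_exp2l ?prime_gt1 //; lia.
apply: (upper (chi := 'chi_i + chi')).
- by rewrite rpredD ?irr_char.
- apply: TIZ; apply/trivgP; rewrite -ker; apply/subsetP=> x /setIP[Kx Zx].
  apply/setIP; split; last exact: (subsetP (cfker_addr (irr_char i) Nchi') x Kx).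
  apply/setIP; split=> //.
  have : x \in cfker (chi' + 'chi_i) by rewrite addrC.
  by move/(subsetP (cfker_addr Nchi' (irr_char i))).
- rewrite cfunE deg1 -addn1 natrD addrC lerD // (le_trans le) // ler_nat.
  move: lM; nia.
Qed.


Lemma main_aux (p : nat) (gT : finGroupType) (G : {group gT}) :
  prime p -> odd p -> #|G| = (p ^ 4)%N ->
  (rdim G <= p.+1)%N /\
  ('Z(G) \isog [set: 'Z_p * 'Z_p] ->
   (G / 'Z(G)) \isog [set: 'Z_p * 'Z_p] ->
   rdim G = p.+1).
Proof.
move=> pp op oG; have A := partA pp op oG; split=> // isoZ _.
have ncZ : ~~ cyclic 'Z(G) by rewrite (isog_cyclic isoZ) Zp2_noncyclic.
have nab : ~~ abelian G.
  apply/negP => abG; have eZ : 'Z(G) = G by apply/setIidPl.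
  have := card_isog isoZ; rewrite cardsT card_prod card_ord Zp_cast ?prime_gt1 //.
  rewrite (_ : #|'Z(G)%G| = #|G|); last by rewrite /= eZ.
  rewrite oG => e; have := prime_gt1 pp; move: e; nia.
have B := lower_bound pp oG nab ncZ (rdim_spec G).
by apply/eqP; rewrite eqn_leq A B.
Qed.

End S9.

Unset Implicit Arguments.

Theorem lemma3p2 (p : nat) (gT : finGroupType) (G : {group gT}) :
  prime p -> odd p -> #|G| = (p ^ 4)%N ->
  (rdim G <= p.+1)%N /\
  ('Z(G) \isog [set: 'Z_p * 'Z_p] ->
   (G / 'Z(G)) \isog [set: 'Z_p * 'Z_p] ->
   rdim G = p.+1).
Proof. exact: main_aux. Qed.
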